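(* Let $C$ be a circle graph and $K\subseteq V(C)$ an independent set such that $K$ contains at least one vertex of degree at least $2$ in $C$ and no two vertices of $K$ are twins in $C$. Then there exist distinct vertices $a,b\in V(C)\setminus K$ such that $|N_C(a)\cap N_C(b)\cap K|=1$.
   Context: Graphs are finite, simple, undirected. A circle graph is a graph isomorphic to the intersection graph of a finite set of chords of a circle (vertices are chords, two vertices adjacent iff the chords intersect). $N_C(u)$ denotes the neighbourhood of $u$. A set is independent if no two of its vertices are adjacent. Two vertices $u,v$ are twins if $N_C(u)\setminus\{v\}=N_C(v)\setminus\{u\}$. *)

(* Defs.v *)
From mathcomp Require Import all_boot.
Set Implicit Arguments. Unset Strict Implicit. Unset Printing Implicit Defensive.

Definition simple_graph (T : finType) (e : rel T) : Prop :=
  symmetric e /\ irreflexive e.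

Definition nbhd (T : finType) (e : rel T) (u : T) : {set T} := [set v | e u v].

(* Chords of a circle, combinatorially: the circle is cut at a point not
   used as an endpoint, so the endpoints of the chords become points of a
   line (positions in nat, in circular order).  A chord is a pair (x, y)
   with x < y.  Two chords with pairwise distinct endpoints intersect iff
   their endpoints interleave. *)
Definition chords_cross (c d : nat * nat) : bool :=
  ((c.1 < d.1) && (d.1 < c.2) && (c.2 < d.2)) ||
  ((d.1 < c.1) && (c.1 < d.2) && (d.2 < c.2)).

Definition circle_graph (T : finType) (e : rel T) : Prop :=
  simple_graph e /\
  exists p : T -> nat * nat,
    [/\ forall u, (p u).1 < (p u).2,
        forall u v, u != v ->
          [&& (p u).1 != (p v).1, (p u).1 != (p v).2,
              (p u).2 != (p v).1 & (p u).2 != (p v).2] &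
        forall u v, u != v -> e u v = chords_cross (p u) (p v)].

Definition independent (T : finType) (e : rel T) (K : {set T}) : Prop :=
  forall u v, u \in K -> v \in K -> ~~ e u v.

Definition twins (T : finType) (e : rel T) (u v : T) : Prop :=
  nbhd e u :\ v = nbhd e v :\ u.

(* Main.v *)
From Stdlib Require Import Lia.
Definition inI (l h x : nat) : Prop := l < x < h.
Definition outI (l h x : nat) : Prop := x <= l \/ h <= x.
Definition lam (l h l' h' : nat) : Prop :=
  h < l' \/ h' < l \/ (l < l' /\ h' < h) \/ (l' < l /\ h < h').
Definition crs (l h c1 c2 : nat) : Prop :=
  (inI l h c1 /\ outI l h c2) \/ (outI l h c1 /\ inI l h c2).
Definition ncrs (l h c1 c2 : nat) : Prop :=
  (inI l h c1 /\ inI l h c2) \/ (outI l h c1 /\ outI l h c2).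
Definition hide (P : Prop) := P.

Ltac brk0 H := lazymatch type of H with
 | _ /\ _ => let H1 := fresh "H" in let H2 := fresh "H" in destruct H as [H1 H2]; brk0 H1; brk0 H2
 | _ \/ _ => destruct H as [H|H]; try (exfalso; lia); brk0 H
 | _ => idtac end.
Ltac brk H := unfold hide, lam, crs, ncrs, inI, outI in H; brk0 H.

Lemma patP (f1 f2 g1 g2 p u v : nat) : hide (lam f1 f2 g1 g2) ->
  inI f1 f2 p -> inI g1 g2 p -> inI f1 f2 u -> hide (outI g1 g2 u) ->
  inI g1 g2 v -> hide (outI f1 f2 v) -> False.
Proof. unfold inI; intros L ? ? ? U ? V. brk L; brk U; brk V; lia. Qed.

Lemma fD (a1 a2 b1 b2 r1 r2 x1 x2 y1 y2 f1 f2 : nat) :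
  x1 < x2 -> y1 < y2 -> f1 < f2 -> hide (x2 < y1 \/ y2 < x1) ->
  hide (lam x1 x2 f1 f2) -> hide (lam y1 y2 f1 f2) ->
  inI x1 x2 a1 -> inI y1 y2 a2 -> inI x1 x2 b1 -> inI y1 y2 b2 -> inI x1 x2 r1 ->
  hide (outI x1 x2 r2) -> hide (outI y1 y2 r2) ->
  hide (crs f1 f2 r1 r2) -> hide (crs f1 f2 a1 a2) -> hide (ncrs f1 f2 b1 b2) ->
  inI f1 f2 a1 /\ inI f1 f2 r1 /\ outI f1 f2 b1.
Proof.

  intros ? ? ? D Lx Ly ? ? ? ? ? R1 R2 Cr Ca Nb. unfold inI in * |- .
  brk D; brk Lx; brk Ly; brk R1; brk R2; brk Cr; brk Ca; brk Nb; unfold inI, outI; lia.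
Qed.

Lemma fN2 (a1 a2 b1 b2 r1 r2 x1 x2 y1 y2 f1 f2 : nat) :
  x1 < x2 -> y1 < y2 -> f1 < f2 -> y1 < x1 -> x2 < y2 ->
  hide (lam x1 x2 f1 f2) -> hide (lam y1 y2 f1 f2) ->
  inI x1 x2 a1 -> hide (outI y1 y2 a2) -> inI x1 x2 b1 -> hide (outI y1 y2 b2) -> inI x1 x2 r1 ->
  hide (outI x1 x2 r2) -> inI y1 y2 r2 ->
  hide (crs f1 f2 r1 r2) -> hide (crs f1 f2 a1 a2) -> hide (ncrs f1 f2 b1 b2) ->
  inI f1 f2 a1 /\ inI f1 f2 r1 /\ outI f1 f2 b1.
Proof.

  intros ? ? ? ? ? Lx Ly ? A2 ? B2 ? R1 ? Cr Ca Nb. unfold inI in * |- .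
  brk Lx; brk Ly; brk A2; brk B2; brk R1; brk Cr; brk Ca; brk Nb; unfold inI, outI; lia.
Qed.

Lemma fN1 (a1 a2 b1 b2 r1 r2 x1 x2 y1 y2 f1 f2 : nat) :
  x1 < x2 -> y1 < y2 -> f1 < f2 -> x1 < y1 -> y2 < x2 ->
  hide (lam x1 x2 f1 f2) -> hide (lam y1 y2 f1 f2) ->
  inI y1 y2 a1 -> hide (outI x1 x2 a2) -> inI y1 y2 b1 -> hide (outI x1 x2 b2) -> inI x1 x2 r1 ->
  hide (outI y1 y2 r1) -> hide (outI x1 x2 r2) ->
  hide (crs f1 f2 r1 r2) -> hide (crs f1 f2 a1 a2) -> hide (ncrs f1 f2 b1 b2) ->
  (f1 < x1 /\ x2 < f2 /\ outI f1 f2 a2 /\ inI f1 f2 b2 /\ outI f1 f2 r2) \/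
  ((f2 < x1 \/ x2 < f1) /\ inI f1 f2 a2 /\ outI f1 f2 b2 /\ inI f1 f2 r2).
Proof.

  intros ? ? ? ? ? Lx Ly ? A2 ? B2 ? R1 R2 Cr Ca Nb. unfold inI in * |- .
  brk Lx; brk Ly; brk A2; brk B2; brk R1; brk R2; brk Cr; brk Ca; brk Nb; unfold inI, outI; lia.
Qed.

Lemma finN1 (a1 a2 b1 b2 r2 x1 x2 f1 f2 g1 g2 : nat) :
  x1 < x2 -> f1 < f2 -> g1 < g2 -> inI x1 x2 a1 -> hide (lam f1 f2 g1 g2) ->
  hide ((f1 < x1 /\ x2 < f2 /\ outI f1 f2 a2 /\ inI f1 f2 b2 /\ outI f1 f2 r2) \/
  ((f2 < x1 \/ x2 < f1) /\ inI f1 f2 a2 /\ outI f1 f2 b2 /\ inI f1 f2 r2)) ->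
  hide ((g1 < x1 /\ x2 < g2 /\ outI g1 g2 b2 /\ inI g1 g2 a2 /\ outI g1 g2 r2) \/
  ((g2 < x1 \/ x2 < g1) /\ inI g1 g2 b2 /\ outI g1 g2 a2 /\ inI g1 g2 r2)) -> False.
Proof.
  intros ? ? ? ? L F G. unfold inI in * |-.
  brk F; brk G; brk L; lia.
Qed.

Lemma core (a1 a2 b1 b2 r1 r2 x1 x2 y1 y2 f1 f2 g1 g2 : nat) :
  x1 < x2 -> y1 < y2 -> f1 < f2 -> g1 < g2 ->
  hide (lam x1 x2 y1 y2) -> hide (lam x1 x2 f1 f2) -> hide (lam x1 x2 g1 g2) ->
  hide (lam y1 y2 f1 f2) -> hide (lam y1 y2 g1 g2) -> hide (lam f1 f2 g1 g2) ->
  inI x1 x2 a1 -> hide (outI x1 x2 a2) -> inI x1 x2 b1 -> hide (outI x1 x2 b2) ->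
  inI x1 x2 r1 -> hide (outI x1 x2 r2) ->
  hide (crs y1 y2 a1 a2) -> hide (crs y1 y2 b1 b2) -> hide (ncrs y1 y2 r1 r2) ->
  hide (crs f1 f2 r1 r2) -> hide (crs f1 f2 a1 a2) -> hide (ncrs f1 f2 b1 b2) ->
  hide (crs g1 g2 r1 r2) -> hide (crs g1 g2 b1 b2) -> hide (ncrs g1 g2 a1 a2) -> False.
Proof.
  intros Px Py Pf Pg Lxy Lxf Lxg Lyf Lyg Lfg A1 A2 B1 B2 R1 R2 Cya Cyb Nyr Cfr Cfa Nfb Cgr Cgb Nga.
  assert (Lxy' := Lxy).
  unfold inI in A1, B1, R1.
  brk Lxy'.
  - assert (inI y1 y2 a2) by (brk Cya; unfold inI; lia).
    assert (inI y1 y2 b2) by (brk Cyb; unfold inI; lia).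
    assert (hide (outI y1 y2 r2)) by (brk Nyr; unfold hide, outI; lia).
    assert (HD : hide (x2 < y1 \/ y2 < x1)) by (unfold hide; lia).
    destruct (fD a1 a2 b1 b2 r1 r2 x1 x2 y1 y2 f1 f2) as [F1 [F2 F3]]; auto.
    destruct (fD b1 b2 a1 a2 r1 r2 x1 x2 y1 y2 g1 g2) as [G1 [G2 G3]]; auto.
    exact (patP f1 f2 g1 g2 r1 a1 b1 Lfg F2 G2 F1 G3 G1 F3).
  - assert (inI y1 y2 a2) by (brk Cya; unfold inI; lia).
    assert (inI y1 y2 b2) by (brk Cyb; unfold inI; lia).
    assert (hide (outI y1 y2 r2)) by (brk Nyr; unfold hide, outI; lia).
    assert (HD : hide (x2 < y1 \/ y2 < x1)) by (unfold hide; lia).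
    destruct (fD a1 a2 b1 b2 r1 r2 x1 x2 y1 y2 f1 f2) as [F1 [F2 F3]]; auto.
    destruct (fD b1 b2 a1 a2 r1 r2 x1 x2 y1 y2 g1 g2) as [G1 [G2 G3]]; auto.
    exact (patP f1 f2 g1 g2 r1 a1 b1 Lfg F2 G2 F1 G3 G1 F3).
  - assert (inI y1 y2 a1) by (brk Cya; brk A2; unfold inI; lia).
    assert (inI y1 y2 b1) by (brk Cyb; brk B2; unfold inI; lia).
    assert (hide (outI y1 y2 r1)) by (brk Nyr; brk R2; unfold hide, outI; lia).
    assert (F := fN1 a1 a2 b1 b2 r1 r2 x1 x2 y1 y2 f1 f2).
    assert (G := fN1 b1 b2 a1 a2 r1 r2 x1 x2 y1 y2 g1 g2).
    eapply (finN1 a1 a2 b1 b2 r2 x1 x2 f1 f2 g1 g2); [exact Px|exact Pf|exact Pg|unfold inI; lia|exact Lfg| |];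
    unfold hide; [apply F | apply G]; try assumption; unfold inI in *; lia.
  - assert (hide (outI y1 y2 a2)) by (brk Cya; unfold hide, outI; lia).
    assert (hide (outI y1 y2 b2)) by (brk Cyb; unfold hide, outI; lia).
    assert (inI y1 y2 r2) by (brk Nyr; unfold inI; lia).
    assert (F := fN2 a1 a2 b1 b2 r1 r2 x1 x2 y1 y2 f1 f2).
    assert (G := fN2 b1 b2 a1 a2 r1 r2 x1 x2 y1 y2 g1 g2).
    destruct F as [F1 [F2 F3]]; try assumption; try (unfold inI in *; lia).
    destruct G as [G1 [G2 G3]]; try assumption; try (unfold inI in *; lia).
    exact (patP f1 f2 g1 g2 r1 a1 b1 Lfg F2 G2 F1 G3 G1 F3).
Qed.

Lemma crs_sym l h c1 c2 : hide (crs l h c1 c2) -> hide (crs l h c2 c1).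
Proof. unfold hide, crs; tauto. Qed.
Lemma ncrs_sym l h c1 c2 : hide (ncrs l h c1 c2) -> hide (ncrs l h c2 c1).
Proof. unfold hide, ncrs; tauto. Qed.

Lemma coreR (a1 a2 b1 b2 r1 r2 x1 x2 y1 y2 f1 f2 g1 g2 : nat) :
  x1 < x2 -> y1 < y2 -> f1 < f2 -> g1 < g2 ->
  hide (lam x1 x2 y1 y2) -> hide (lam x1 x2 f1 f2) -> hide (lam x1 x2 g1 g2) ->
  hide (lam y1 y2 f1 f2) -> hide (lam y1 y2 g1 g2) -> hide (lam f1 f2 g1 g2) ->
  inI x1 x2 a1 -> hide (outI x1 x2 a2) -> inI x1 x2 b1 -> hide (outI x1 x2 b2) ->
  hide (crs x1 x2 r1 r2) ->
  hide (crs y1 y2 a1 a2) -> hide (crs y1 y2 b1 b2) -> hide (ncrs y1 y2 r1 r2) ->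
  hide (crs f1 f2 r1 r2) -> hide (crs f1 f2 a1 a2) -> hide (ncrs f1 f2 b1 b2) ->
  hide (crs g1 g2 r1 r2) -> hide (crs g1 g2 b1 b2) -> hide (ncrs g1 g2 a1 a2) -> False.
Proof.
  intros Px Py Pf Pg Lxy Lxf Lxg Lyf Lyg Lfg A1 A2 B1 B2 C Cya Cyb Nyr Cfr Cfa Nfb Cgr Cgb Nga.
  destruct C as [[R1 R2]|[R2 R1]].
  - exact (core a1 a2 b1 b2 r1 r2 x1 x2 y1 y2 f1 f2 g1 g2 Px Py Pf Pg Lxy Lxf Lxg Lyf Lyg Lfg A1 A2 B1 B2 R1 R2 Cya Cyb Nyr Cfr Cfa Nfb Cgr Cgb Nga).
  - exact (core a1 a2 b1 b2 r2 r1 x1 x2 y1 y2 f1 f2 g1 g2 Px Py Pf Pg Lxy Lxf Lxg Lyf Lyg Lfg A1 A2 B1 B2 R1 R2 Cya Cyb (ncrs_sym _ _ _ _ Nyr) (crs_sym _ _ _ _ Cfr) Cfa Nfb (crs_sym _ _ _ _ Cgr) Cgb Nga).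
Qed.

Lemma coreB (a1 a2 b1 b2 r1 r2 x1 x2 y1 y2 f1 f2 g1 g2 : nat) :
  x1 < x2 -> y1 < y2 -> f1 < f2 -> g1 < g2 ->
  hide (lam x1 x2 y1 y2) -> hide (lam x1 x2 f1 f2) -> hide (lam x1 x2 g1 g2) ->
  hide (lam y1 y2 f1 f2) -> hide (lam y1 y2 g1 g2) -> hide (lam f1 f2 g1 g2) ->
  inI x1 x2 a1 -> hide (outI x1 x2 a2) -> hide (crs x1 x2 b1 b2) ->
  hide (crs x1 x2 r1 r2) ->
  hide (crs y1 y2 a1 a2) -> hide (crs y1 y2 b1 b2) -> hide (ncrs y1 y2 r1 r2) ->
  hide (crs f1 f2 r1 r2) -> hide (crs f1 f2 a1 a2) -> hide (ncrs f1 f2 b1 b2) ->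
  hide (crs g1 g2 r1 r2) -> hide (crs g1 g2 b1 b2) -> hide (ncrs g1 g2 a1 a2) -> False.
Proof.
  intros Px Py Pf Pg Lxy Lxf Lxg Lyf Lyg Lfg A1 A2 C Cxr Cya Cyb Nyr Cfr Cfa Nfb Cgr Cgb Nga.
  destruct C as [[B1 B2]|[B2 B1]].
  - exact (coreR a1 a2 b1 b2 r1 r2 x1 x2 y1 y2 f1 f2 g1 g2 Px Py Pf Pg Lxy Lxf Lxg Lyf Lyg Lfg A1 A2 B1 B2 Cxr Cya Cyb Nyr Cfr Cfa Nfb Cgr Cgb Nga).
  - exact (coreR a1 a2 b2 b1 r1 r2 x1 x2 y1 y2 f1 f2 g1 g2 Px Py Pf Pg Lxy Lxf Lxg Lyf Lyg Lfg A1 A2 B1 B2 Cxr Cya (crs_sym _ _ _ _ Cyb) Nyr Cfr Cfa (ncrs_sym _ _ _ _ Nfb) Cgr (crs_sym _ _ _ _ Cgb) Nga).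
Qed.

Lemma coreAll (a1 a2 b1 b2 r1 r2 x1 x2 y1 y2 f1 f2 g1 g2 : nat) :
  x1 < x2 -> y1 < y2 -> f1 < f2 -> g1 < g2 ->
  hide (lam x1 x2 y1 y2) -> hide (lam x1 x2 f1 f2) -> hide (lam x1 x2 g1 g2) ->
  hide (lam y1 y2 f1 f2) -> hide (lam y1 y2 g1 g2) -> hide (lam f1 f2 g1 g2) ->
  hide (crs x1 x2 a1 a2) -> hide (crs x1 x2 b1 b2) ->
  hide (crs x1 x2 r1 r2) ->
  hide (crs y1 y2 a1 a2) -> hide (crs y1 y2 b1 b2) -> hide (ncrs y1 y2 r1 r2) ->
  hide (crs f1 f2 r1 r2) -> hide (crs f1 f2 a1 a2) -> hide (ncrs f1 f2 b1 b2) ->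
  hide (crs g1 g2 r1 r2) -> hide (crs g1 g2 b1 b2) -> hide (ncrs g1 g2 a1 a2) -> False.
Proof.
  intros Px Py Pf Pg Lxy Lxf Lxg Lyf Lyg Lfg C Cxb Cxr Cya Cyb Nyr Cfr Cfa Nfb Cgr Cgb Nga.
  destruct C as [[A1 A2]|[A2 A1]].
  - exact (coreB a1 a2 b1 b2 r1 r2 x1 x2 y1 y2 f1 f2 g1 g2 Px Py Pf Pg Lxy Lxf Lxg Lyf Lyg Lfg A1 A2 Cxb Cxr Cya Cyb Nyr Cfr Cfa Nfb Cgr Cgb Nga).
  - exact (coreB a2 a1 b1 b2 r1 r2 x1 x2 y1 y2 f1 f2 g1 g2 Px Py Pf Pg Lxy Lxf Lxg Lyf Lyg Lfg A1 A2 Cxb Cxr (crs_sym _ _ _ _ Cya) Cyb Nyr Cfr (crs_sym _ _ _ _ Cfa) Nfb Cgr Cgb (ncrs_sym _ _ _ _ Nga)).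
Qed.

Require Import Defs.
From mathcomp Require Import all_boot zify.

Lemma cc_lam (c d : nat*nat) : c.1 < c.2 -> d.1 < d.2 ->
  [&& c.1 != d.1, c.1 != d.2, c.2 != d.1 & c.2 != d.2] -> ~~ chords_cross c d ->
  hide (lam c.1 c.2 d.1 d.2).
Proof. case: c d => c1 c2 [d1 d2] /=; rewrite /chords_cross /hide /lam /=. lia. Qed.
Lemma cc_crs (c d : nat*nat) : c.1 < c.2 -> d.1 < d.2 ->
  [&& c.1 != d.1, c.1 != d.2, c.2 != d.1 & c.2 != d.2] -> chords_cross c d ->
  hide (crs d.1 d.2 c.1 c.2).
Proof. case: c d => c1 c2 [d1 d2] /=; rewrite /chords_cross /hide /crs /inI /outI /=. lia. Qed.
Lemma cc_ncrs (c d : nat*nat) : c.1 < c.2 -> d.1 < d.2 ->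
  [&& c.1 != d.1, c.1 != d.2, c.2 != d.1 & c.2 != d.2] -> ~~ chords_cross c d ->
  hide (ncrs d.1 d.2 c.1 c.2).
Proof. case: c d => c1 c2 [d1 d2] /=; rewrite /chords_cross /hide /ncrs /inI /outI /=. lia. Qed.

Lemma geomV (T : finType) (e : rel T) (K : {set T}) (p : T -> nat * nat) :
  (forall u, (p u).1 < (p u).2) ->
  (forall u v, u != v ->
          [&& (p u).1 != (p v).1, (p u).1 != (p v).2,
              (p u).2 != (p v).1 & (p u).2 != (p v).2]) ->
  (forall u v, u != v -> e u v = chords_cross (p u) (p v)) ->
  forall a b r x y f g,
  x \in K -> y \in K -> f \in K -> g \in K -> a \notin K -> b \notin K -> r \notin K ->
  x != y -> x != f -> x != g -> y != f -> y != g -> f != g ->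
  ~~ e x y -> ~~ e x f -> ~~ e x g -> ~~ e y f -> ~~ e y g -> ~~ e f g ->
  e a x -> e b x -> e r x -> e a y -> e b y -> ~~ e r y ->
  e r f -> e a f -> ~~ e b f -> e r g -> e b g -> ~~ e a g -> False.
Proof.
  move=> Hord Hd Hc a b r x y f g Kx Ky Kf Kg Ka Kb Kr nxy nxf nxg nyf nyg nfg
   Exy Exf Exg Eyf Eyg Efg Eax Ebx Erx Eay Eby Ery Erf Eaf Ebf Erg Ebg Eag.
  have nK u v : u \notin K -> v \in K -> u != v.
    by move=> Hu Hv; apply/eqP => E; move: Hu; rewrite E Hv.
  have L u v : u != v -> ~~ e u v -> hide (lam (p u).1 (p u).2 (p v).1 (p v).2).
    by move=> uv; rewrite Hc //; apply: cc_lam => //; exact: Hd.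
  have C u v : u \notin K -> v \in K -> e u v -> hide (crs (p v).1 (p v).2 (p u).1 (p u).2).
    by move=> Hu Hv; rewrite Hc ?nK //; apply: cc_crs => //; apply: Hd; exact: nK.
  have N u v : u \notin K -> v \in K -> ~~ e u v -> hide (ncrs (p v).1 (p v).2 (p u).1 (p u).2).
    by move=> Hu Hv; rewrite Hc ?nK //; apply: cc_ncrs => //; apply: Hd; exact: nK.
  exact: (coreAll (p a).1 (p a).2 (p b).1 (p b).2 (p r).1 (p r).2 (p x).1 (p x).2
    (p y).1 (p y).2 (p f).1 (p f).2 (p g).1 (p g).2 (ltP (Hord x)) (ltP (Hord y))
    (ltP (Hord f)) (ltP (Hord g)) (L x y nxy Exy) (L x f nxf Exf) (L x g nxg Exg)
    (L y f nyf Eyf) (L y g nyg Eyg) (L f g nfg Efg)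
    (C a x Ka Kx Eax) (C b x Kb Kx Ebx) (C r x Kr Kx Erx)
    (C a y Ka Ky Eay) (C b y Kb Ky Eby) (N r y Kr Ky Ery)
    (C r f Kr Kf Erf) (C a f Ka Kf Eaf) (N b f Kb Kf Ebf)
    (C r g Kr Kg Erg) (C b g Kb Kg Ebg) (N a g Ka Kg Eag)).
Qed.

Theorem mainTheorem2 (T : finType) (e : rel T) (K : {set T}) :
  circle_graph e ->
  independent e K ->
  (exists2 k, k \in K & 2 <= #|nbhd e k|) ->
  (forall u v, u \in K -> v \in K -> u != v -> ~ twins e u v) ->
  exists a b : T,
    [/\ a != b, a \notin K, b \notin K &
        #|nbhd e a :&: nbhd e b :&: K| = 1].
Proof.
  case=> [[Hsym Hirr] [p [Hord Hd Hc]]] Hind [k0 Kk0 Hdeg] Htw.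
  have Kn u v : u \in K -> e u v -> v \notin K.
    by move=> Hu Huv; apply/negP => Hv; move: (Hind u v Hu Hv); rewrite Huv.
  have Hm : forall n a b, #|nbhd e a :&: nbhd e b :&: K| <= n -> a != b ->
      a \notin K -> b \notin K -> 0 < #|nbhd e a :&: nbhd e b :&: K| ->
      exists a b : T, [/\ a != b, a \notin K, b \notin K &
        #|nbhd e a :&: nbhd e b :&: K| = 1].
  { elim=> [|n IH] a b Hn ab Ka Kb Hpos.
    - by move: Hpos; rewrite lt0n -leqn0 Hn.
    case: (ltnP 1 #|nbhd e a :&: nbhd e b :&: K|) => [H2|H1]; last first.
      by exists a, b; split => //; apply/eqP; rewrite eqn_leq H1 Hpos.
    case/card_gt1P: H2 => x [y [Hx Hy xy]].
    move: Hx Hy; rewrite !inE => /andP [/andP [Eax Ebx] Kx] /andP [/andP [Eay Eby] Ky].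
    have step : forall x y r, x \in K -> y \in K -> x != y -> e a x -> e b x ->
        e a y -> e b y -> e x r -> ~~ e y r ->
        exists a b : T, [/\ a != b, a \notin K, b \notin K &
          #|nbhd e a :&: nbhd e b :&: K| = 1].
    { move=> {Eax Ebx Kx Eay Eby Ky xy} {}x {}y r Kx Ky xy Eax Ebx Eay Eby Exr Eyr.
      have Kr : r \notin K by exact: Kn Exr.
      have Erx : e r x by rewrite Hsym.
      have Ery : ~~ e r y by rewrite Hsym.
      have Hpr : forall c, c \notin K -> e c x -> e c y -> (forall f, f \in K -> e r f -> e c f -> e (if c == a then b else a) f) ->
         ((c == a) || (c == b)) ->
         exists a b : T, [/\ a != b, a \notin K, b \notin K &
          #|nbhd e a :&: nbhd e b :&: K| = 1].
      { move=> c Kc Ecx Ecy Hf Hc'.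
        have rc : r != c by apply/eqP => E; move: Ery; rewrite E Ecy.
        have Hlt : #|nbhd e r :&: nbhd e c :&: K| < #|nbhd e a :&: nbhd e b :&: K|.
        { apply: proper_card; apply/properP; split.
          - apply/subsetP => f; rewrite !inE => /andP [/andP [Erf Ecf] Kf].
            have := Hf f Kf Erf Ecf; rewrite Kf andbT.
            case/orP: Hc' => /eqP Ec; subst c; first by rewrite eqxx => ->; rewrite Ecf.
            by case: eqP => [E|_] /= H; [subst b|]; rewrite ?Ecf ?H.
          - exists y; first by rewrite !inE Eay Eby Ky.
            by rewrite !inE (negbTE Ery). }
        apply: (IH r c) => //.
        - by rewrite -ltnS; exact: leq_trans Hlt Hn.
        - by apply/card_gt0P; exists x; rewrite !inE Erx Ecx Kx. }
      have [H1|H1] := boolP [forall f, ((f \in K) && e r f && e a f) ==> e b f].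
      { apply: (Hpr a) => //; last by rewrite eqxx.
        move=> f Kf Erf Eaf; rewrite eqxx.
        by apply: (implyP (forallP H1 f)); rewrite Kf Erf Eaf. }
      have [H2|H2] := boolP [forall f, ((f \in K) && e r f && e b f) ==> e a f].
      { apply: (Hpr b) => //; last by rewrite eqxx orbT.
        move=> f Kf Erf Ebf; case: eqP => [_|_] /=; first exact: Ebf.
        by apply: (implyP (forallP H2 f)); rewrite Kf Erf Ebf. }
      exfalso.
      move: H1 H2; rewrite !negb_forall => /existsP [f Hf] /existsP [g Hg].
      move: Hf Hg; rewrite !negb_imply => /andP [/andP [/andP [Kf Erf] Eaf] Ebf]
        /andP [/andP [/andP [Kg Erg] Ebg] Eag].
      have ne (u v : T) (P : bool) : P -> (u == v -> ~~ P) -> u != v.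
        by move=> HP H; apply/negP => /H; rewrite HP.
      apply: (@geomV T e K p Hord Hd Hc a b r x y f g) => //.
      - by apply: (ne _ _ (e b x)) => // /eqP ->.
      - by apply: (ne _ _ (e a x)) => // /eqP ->.
      - by apply: (ne _ _ (e r f)) => // /eqP <-.
      - by apply: (ne _ _ (e r g)) => // /eqP <-.
      - by apply: (ne _ _ (e a f)) => // /eqP ->.
      - by apply: Hind.
      - by apply: Hind.
      - by apply: Hind.
      - by apply: Hind.
      - by apply: Hind.
      - by apply: Hind.
      }
    have : exists r, e x r != e y r.
    { apply/existsP; apply: contraT; rewrite negb_exists => /forallP Hall.
      case: (Htw x y Kx Ky xy); apply/setP => r; rewrite !inE.
      have := Hall r; rewrite negbK => /eqP ->.
      case: (eqVneq r y) => [->|ry]; first by rewrite Hirr !andbF.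
      case: (eqVneq r x) => [->|rx]; first by rewrite (negbTE (Hind y x Ky Kx)) !andbF.
      by []. }
    case=> r; case: (boolP (e x r)) => Exr Eyr.
    - by apply: (step x y r) => //; move: Eyr; rewrite Exr; case: (e y r).
    - apply: (step y x r) => //; try by rewrite eq_sym.
      all: by move: Eyr; case: (e y r). }
  case/card_gt1P: Hdeg => a [b [Ha Hb ab]].
  move: Ha Hb; rewrite !inE => Ea Eb.
  apply: (Hm _ a b (leqnn _) ab); [exact: Kn Ea | exact: Kn Eb |].
  by apply/card_gt0P; exists k0; rewrite !inE Kk0 andbT -!(Hsym k0) Ea Eb.
Qed.
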